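(* Let $m\ge1$, $N=2^m$, let $\mathcal{A}\subseteq[0,N-1]$ be nonempty and $\mathbf{P}\in\mathbb{F}_2^{N\times N}$ upper triangular with unit diagonal. Then $\mathcal{C}_{\mathbf{P}\boldsymbol{G}_N}(\mathcal{A})\subset\mathcal{C}_{\boldsymbol{G}_N}([\min(\mathcal{A}),N-1])$.
   Context: $[\ell,u]=\{\ell,\dots,u\}$. $\boldsymbol{G}_N=\begin{pmatrix}1&0\\1&1\end{pmatrix}^{\otimes m}$ over $\mathbb{F}_2$, rows/columns indexed by $0,\dots,N-1$; $\mathcal{C}_{\mathbf{B}}(\mathcal{S})$ is the code spanned by the rows of $\mathbf{B}$ indexed by $\mathcal{S}$. *)

(* Defs.v *)
From mathcomp Require Import all_boot all_algebra.
From mathcomp Require Import mxtens.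
Set Implicit Arguments. Unset Strict Implicit. Unset Printing Implicit Defensive.
Import GRing.Theory.
Local Open Scope ring_scope.

Definition Fker : 'M['F_2]_2 := \matrix_(i < 2, j < 2) (if (j <= i)%N then 1 else 0).

(* G_N = F^{(x) m}, N = 2^m, standard Kronecker power (row index i1*2^(m-1)+i2) *)
Definition GN (m : nat) : 'M['F_2]_(2 ^ m) := ntensmx Fker m.

Definition code {N : nat} (B : 'M['F_2]_N) (S : {set 'I_N}) : 'M['F_2]_N :=
  (\sum_(i in S) <<row i B>>)%MS.

Definition upper_unitriangular {N : nat} (P : 'M['F_2]_N) : Prop :=
  (forall i j : 'I_N, (j < i)%N -> P i j = 0) /\ (forall i : 'I_N, P i i = 1).

(* Main.v *)
Require Import Defs.
From mathcomp Require Import all_boot all_algebra.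
From mathcomp Require Import mxtens.
Import GRing.Theory.
Local Open Scope ring_scope.

Theorem lemma1 (m : nat) (hm : (1 <= m)%N) (A : {set 'I_(2 ^ m)})
  (a0 : 'I_(2 ^ m)) (ha0 : a0 \in A) (hmin : forall a, a \in A -> (a0 <= a)%N)
  (P : 'M['F_2]_(2 ^ m)) (hP : upper_unitriangular P) :
  (code (P *m GN m) A <= code (GN m) [set i : 'I_(2 ^ m) | (a0 <= i)%N])%MS.
Proof.
rewrite /code; apply/sumsmx_subP => i iA.
rewrite genmxE row_mul mulmx_sum_row.
apply/summx_sub => j _.
case: (ltnP j i) => hji.
  by rewrite mxE (proj1 hP i j hji) scale0r sub0mx.
apply: scalemx_sub.
have jS : j \in [set i0 : 'I_(2 ^ m) | (a0 <= i0)%N].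
  by rewrite inE (leq_trans (hmin i iA) hji).
apply: submx_trans (sumsmx_sup j jS (submx_refl _)).
by rewrite genmxE.
Qed.
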